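(* Let $\omega\in(0,1)$ be irrational and $s>0$. Then $$\limsup_{N\to+\infty}\Big(\sum_{j=0}^{k(N)}\frac{\log q_{j+1}}{q_j}-s\log N\Big)<+\infty$$ holds if and only if $$\limsup_{k\to+\infty}\Big(\sum_{j=0}^{k}\beta_{j-1}\log\omega_j^{-1}+s\log\beta_{k-1}\Big)<+\infty.$$
   Context: Continued fraction data of $\omega$: $\omega_0=\omega$, $\omega_{k+1}=\{1/\omega_k\}$ (fractional part), $a_{k+1}=\lfloor1/\omega_k\rfloor$; $\beta_{-1}=1$, $\beta_k=\prod_{j=0}^k\omega_j$ for $k\ge0$; the convergent denominators are $q_{-1}=0$, $q_0=1$, $q_{k+1}=a_{k+1}q_k+q_{k-1}$. $k(N)$ is defined by $q_{k(N)}\le N<q_{k(N)+1}$. *)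

(* Defs.v *)
From HB Require Import structures.
From mathcomp Require Import all_boot all_order all_algebra.
From mathcomp Require Import all_classical all_reals all_analysis.
Set Implicit Arguments. Unset Strict Implicit. Unset Printing Implicit Defensive.
Import Order.TTheory GRing.Theory Num.Theory.
Local Open Scope ring_scope.

Section CF.
Variable R : realType.

Definition frac (x : R) : R := x - (Num.floor x)%:~R.

Fixpoint omg (w : R) (k : nat) : R :=
  match k with
  | 0 => w
  | k'.+1 => frac (omg w k')^-1
  end.

(* a_{k+1} = floor (1/omega_k) ; we set a_0 := 0 (unused) *)
Definition acf (w : R) (k : nat) : R :=
  match k with
  | 0 => 0
  | k'.+1 => (Num.floor (omg w k')^-1)%:~R
  end.

(* qpair k = (q_{k-1}, q_k); q_{-1} = 0, q_0 = 1,
   q_{k+1} = a_{k+1} q_k + q_{k-1} *)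
Fixpoint qpair (w : R) (k : nat) : R * R :=
  match k with
  | 0 => (0, 1)
  | k'.+1 => let p := qpair w k' in (p.2, acf w k'.+1 * p.2 + p.1)
  end.

Definition qcf (w : R) (k : nat) : R := (qpair w k).2.

(* betam1 w k = beta_{k-1} = prod_{j=0}^{k-1} omega_j  (beta_{-1} = 1) *)
Definition betam1 (w : R) (k : nat) : R := \prod_(j < k) omg w j.

(* k(N): the index k with q_k <= N < q_{k+1}; defined as the largest k
   (k <= N) with q_k <= N.  Since q_k >= k and (q_k) is nondecreasing and
   strictly increasing from k = 1 on, for N >= 1 this is exactly the unique
   k with q_k <= N < q_{k+1}. (For N = 0 it is 0; irrelevant for limsup.) *)
Definition kN (w : R) (N : nat) : nat :=
  \max_(k < N.+1 | qcf w k <= N%:R) k.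

End CF.

(* Main.v *)
Require Import Defs.
From HB Require Import structures.
From mathcomp Require Import all_boot all_order all_algebra.
From mathcomp Require Import all_classical all_reals all_analysis.
From mathcomp Require Import lra ring.
Import Order.TTheory GRing.Theory Num.Theory.
Local Open Scope ring_scope.

Section P.
Variable R : realType.

Lemma frac_itv (x : R) : 0 <= Defs.frac x < 1.
Proof.
rewrite /Defs.frac; have /andP[h1 h2] := floor_itv x.
rewrite subr_ge0 h1 /= intrD in h2 *; lra.
Qed.

Lemma omg_irr (w : R) : 0 < w -> w < 1 -> irrational w ->
  forall j, irrational (omg w j) /\ 0 < omg w j < 1.
Proof.
move=> w0 w1 wi; elim=> [|j [IHi /andP[x0 x1]]] /=; first by rewrite w0 w1.
set x := omg w j in IHi x0 x1 *.
have yr : irrational (Defs.frac x^-1).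
  move=> [q _ hq]; apply: IHi.
  exists (q + (Num.floor x^-1)%:~R)^-1 => //.
  rewrite fmorphV rmorphD /= hq ratr_int /Defs.frac subrK invrK //.
split=> //; have /andP[h0 ->] := frac_itv x^-1; rewrite andbT.
rewrite lt_neqAle h0 andbT eq_sym.
apply/eqP=> h; apply: yr; exists 0 => //; by rewrite rmorph0 h.
Qed.
End P.
Section CFfacts.
Variable R : realType.
Variable w : R.
Hypotheses (w0 : 0 < w) (w1 : w < 1) (wi : irrational w).

Local Notation om := (omg w).
Local Notation q := (qcf w).
Local Notation q' := (fun j => (qpair w j).1).
Local Notation b := (betam1 w).

Lemma om_gt0 j : 0 < om j. Proof. by case: (@omg_irr R w w0 w1 wi j) => _ /andP[]. Qed.
Lemma om_lt1 j : om j < 1. Proof. by case: (@omg_irr R w w0 w1 wi j) => _ /andP[]. Qed.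

Lemma omS j : om j.+1 = (om j)^-1 - acf w j.+1.
Proof. by []. Qed.

Lemma acf_ge1 j : 1 <= acf w j.+1.
Proof.
have h : 1 <= (om j)^-1 by rewrite invf_ge1 ?om_gt0 // ltW ?om_lt1.
by rewrite /acf -[1 in X in X <= _]/((1:int)%:~R) ler_int floor_ge_int.
Qed.

Lemma qS j : q j.+1 = acf w j.+1 * q j + q' j.
Proof. by []. Qed.
Lemma q'S j : q' j.+1 = q j.
Proof. by []. Qed.

Lemma qbasic j : 0 <= q' j <= q j /\ 1 <= q j.
Proof.
elim: j => [|j [/andP[h1 h2] h3]]; first by rewrite /= ler01 lexx.
rewrite q'S qS; have ha := acf_ge1 j.
have h0 : 0 <= q j by lra.
split; last by nra.
rewrite h0 /=; nra.
Qed.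

Lemma q_ge1 j : 1 <= q j. Proof. by case: (qbasic j). Qed.
Lemma q_gt0 j : 0 < q j. Proof. exact: lt_le_trans ltr01 (q_ge1 j). Qed.
Lemma q'_le j : q' j <= q j. Proof. by case: (qbasic j) => /andP[]. Qed.
Lemma q'_ge0 j : 0 <= q' j. Proof. by case: (qbasic j) => /andP[]. Qed.
Lemma q_incr j : q j <= q j.+1.
Proof. rewrite qS; have := acf_ge1 j; have := q_ge1 j; have := q'_ge0 j; nra. Qed.
Lemma q_SS j : q j.+1 + q j <= q j.+2.
Proof.
rewrite [q j.+2]qS q'S; have := acf_ge1 j.+1; have := q_ge1 j.+1; nra.
Qed.
Lemma q_ge_nat j : j%:R <= q j.
Proof.
have H : forall i, i%:R + 1 <= q i.+1.
  elim=> [|i IH]; first by rewrite add0r q_ge1.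
  have := q_SS i; have := q_ge1 i; rewrite -natr1 in IH *; lra.
case: j => [|j]; first by rewrite (le_trans _ (q_ge1 0)) ?ler01.
by rewrite -natr1 H.
Qed.

Lemma bS j : b j.+1 = b j * om j.
Proof. by rewrite /betam1 big_ord_recr. Qed.
Lemma b_gt0 j : 0 < b j.
Proof. elim: j => [|j IH]; first by rewrite /betam1 big_ord0 ltr01.
by rewrite bS mulr_gt0 ?om_gt0. Qed.
Lemma b_decr j : b j.+1 <= b j.
Proof. by rewrite bS ger_pMr ?b_gt0 // ltW ?om_lt1. Qed.

Lemma ident j : b j * q j + b j.+1 * q' j = 1.
Proof.
elim: j => [|j IH]; first by rewrite /betam1 big_ord0 /= mul1r mulr0 addr0.
rewrite q'S qS [b j.+2]bS omS bS.
have h : om j != 0 by rewrite gt_eqF ?om_gt0.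
by rewrite -IH bS; field.
Qed.

Lemma le_inv (a x : R) : 0 < x -> a * x <= 1 -> a <= x^-1.
Proof. by move=> x0 h; rewrite -(ler_pM2r x0) mulVf ?gt_eqF. Qed.

Lemma ln2_le1 : ln (2:R) <= 1.
Proof. have := @le_ln1Dx R 1; rewrite (_ : 1 + 1 = 2) //; apply; lra. Qed.

Lemma bq_bounds j : 2^-1 <= b j * q j <= 1.
Proof.
have := ident j; have := b_decr j; have := q'_le j; have := q'_ge0 j.
have := b_gt0 j.+1; have := q_gt0 j; move=> *.
apply/andP; split; nra.
Qed.

Lemma Lb_bounds j : -1 <= ln (b j * q j) <= 0.
Proof.
have /andP[h1 h2] := bq_bounds j.
have p : 0 < b j * q j by rewrite mulr_gt0 ?b_gt0 ?q_gt0.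
rewrite ln_le0 // andbT.
have : ln 2^-1 <= ln (b j * q j) by rewrite ler_ln // posrE invr_gt0; lra.
rewrite lnV ?posrE; last lra.
have := ln2_le1; lra.
Qed.

Lemma ln_omV j : ln (om j)^-1 = ln (b j) - ln (b j.+1).
Proof.
rewrite lnV ?posrE ?om_gt0 // bS lnM ?posrE ?om_gt0 ?b_gt0 //; lra.
Qed.

Lemma b_le_qinv j : b j <= (q j)^-1.
Proof.
apply: le_inv; first exact: q_gt0.
have := ident j; have := b_gt0 j.+1; have := q'_ge0 j; nra.
Qed.

Lemma qinv_b j : (q j)^-1 - b j <= b j.+1.
Proof.
have e : (q j)^-1 - b j = b j.+1 * (qpair w j).1 * (q j)^-1.
  have := ident j; have := q_gt0 j => qp e.
  apply: (mulIf (x := q j)); first by rewrite gt_eqF.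
  rewrite mulrBl -mulrA mulVf ?gt_eqF // -!mulrA mulVf ?gt_eqF // mulr1; lra.
rewrite e -[X in _ <= X]mulr1 -mulrA ler_wpM2l ?(ltW (b_gt0 _)) //.
rewrite -(ler_pM2r (q_gt0 j)) -mulrA mulVf ?gt_eqF ?q_gt0 // mulr1 mul1r.
exact: q'_le.
Qed.

Definition E j := (ln (q j) + 1) / q j.

Lemma E_ge0 j : 0 <= E j.
Proof.
rewrite /E divr_ge0 ?(ltW (q_gt0 j)) //.
have := ln_ge0 (q_ge1 j); lra.
Qed.

Lemma diff_bound j :
  `|ln (q j.+1) / q j - b j * ln (om j)^-1| <= E j + E j.+1.
Proof.
rewrite ln_omV /E.
have lnb k : ln (b k) = ln (b k * q k) - ln (q k).
  by rewrite lnM ?posrE ?b_gt0 ?q_gt0 //; lra.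
rewrite !lnb.
have := Lb_bounds j; have := Lb_bounds j.+1.
set L0 := ln (b j * q j); set L1 := ln (b j.+1 * q j.+1).
set X := ln (q j.+1); set Y := ln (q j).
have X0 : 0 <= X by apply: ln_ge0; exact: q_ge1.
have Y0 : 0 <= Y by apply: ln_ge0; exact: q_ge1.
set u := (q j)^-1; set v := (q j.+1)^-1.
set B := b j; set B1 := b j.+1.
have B0 : 0 < B by apply: b_gt0.
have Bu : B <= u by apply: b_le_qinv.
have B1v : B1 <= v by apply: b_le_qinv.
have uB : u - B <= B1 by apply: qinv_b.
have p1 : 0 <= (u - B) * X <= v * X.
  rewrite mulr_ge0 ?subr_ge0 //= ler_wpM2r //; lra.
have p2 : 0 <= B * Y <= u * Y by rewrite mulr_ge0 ?(ltW B0) //= ler_wpM2r.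
move=> hL1 hL0.
have p3 : - u <= B * (L0 - L1) <= u.
  have : `|B * (L0 - L1)| <= u.
    rewrite normrM gtr0_norm // -[X in _ <= X]mulr1.
    rewrite (le_trans (ler_wpM2l (ltW B0) (_ : `|L0 - L1| <= 1))) ?ler_wpM2r //.
      by rewrite ler_norml; lra.
  by rewrite ler_norml.
have e : X * u - B * (L0 - Y - (L1 - X)) = (u - B) * X + B * Y - B * (L0 - L1).
  by ring.
rewrite e ler_norml; apply/andP; split.
- have : 0 <= v * X by rewrite mulr_ge0 // invr_ge0 ltW ?q_gt0.
  have : 0 <= v by rewrite invr_ge0 ltW ?q_gt0.
  have : 0 <= u * Y by rewrite mulr_ge0 // invr_ge0 ltW ?q_gt0.
  rewrite !mulrDl !mul1r; lra.
- rewrite !mulrDl !mul1r.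
  have : 0 <= v by rewrite invr_ge0 ltW ?q_gt0.
  rewrite [X * v]mulrC [Y * u]mulrC; lra.
Qed.

Local Notation s j := (Num.sqrt (q j)).

Lemma s_facts j : 1 <= s j /\ s j ^+ 2 = q j.
Proof.
have q1 := q_ge1 j; have e := sqr_sqrtr (ltW (lt_le_trans ltr01 q1)).
split=> //; have := sqrtr_ge0 (q j); rewrite expr2 in e; nra.
Qed.

Lemma E_le j : E j <= 2 * (s j)^-1.
Proof.
have [s1 e] := s_facts j.
have s0 : 0 < s j by lra.
have lns : ln (q j) = 2 * ln (s j) by rewrite -{1}e lnXn // mulr_natl.
have := @le_ln1Dx R (s j - 1); rewrite [1 + _]addrC subrK => /(_ ltac:(lra)) hl.
have -> : E j = (2 * ln (s j) + 1) / s j ^+ 2 by rewrite /E lns e.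
have -> : 2 * (s j)^-1 = 2 * s j / s j ^+ 2.
  by rewrite expr2 invfM mulrA mulfK ?gt_eqF.
rewrite ler_pM2r ?invr_gt0 ?exprn_gt0 //; lra.
Qed.

Definition a j := (s j)^-1.

Lemma a_ge0 j : 0 <= a j.
Proof. by rewrite /a invr_ge0 sqrtr_ge0. Qed.
Lemma a_le1 j : a j <= 1.
Proof. have [s1 _] := s_facts j; by rewrite /a invf_le1 // (lt_le_trans ltr01 s1). Qed.

Lemma a_SS j : a j.+2 <= 3 / 4 * a j.
Proof.
have [s1 e1] := s_facts j; have [s2 e2] := s_facts j.+2.
have h : 2 * q j <= q j.+2 by have := q_SS j; have := q_incr j; lra.
have h2 : s j * (4 / 3) <= s j.+2.
  rewrite -e1 -e2 !expr2 in h; nra.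
have -> : 3 / 4 * a j = (s j * (4 / 3))^-1.
  by rewrite /a; field; rewrite gt_eqF //; lra.
rewrite /a lef_pV2 // posrE; lra.
Qed.

Lemma sum_a n : \sum_(j < n) a j + 4 * (a n + a n.+1) <= 8.
Proof.
elim: n => [|n IH].
  rewrite big_ord0 add0r; have := a_le1 0; have := a_le1 1; lra.
rewrite big_ord_recr /=; have := a_SS n; lra.
Qed.

Lemma sum_E n : \sum_(j < n) E j <= 16.
Proof.
apply: (@le_trans _ _ (\sum_(j < n) 2 * a j)).
  by apply: ler_sum => j _; exact: E_le.
rewrite -mulr_sumr; have := sum_a n; have := a_ge0 n; have := a_ge0 n.+1; lra.
Qed.

Lemma sum_diff n :
  `|\sum_(j < n.+1) (ln (q j.+1) / q j - b j * ln (om j)^-1)| <= 32.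
Proof.
apply: (le_trans (ler_norm_sum _ _ _)).
apply: (@le_trans _ _ (\sum_(j < n.+1) (E j + E j.+1))).
  by apply: ler_sum => j _; exact: diff_bound.
rewrite big_split /=; have := sum_E n.+1.
have : \sum_(j < n.+1) E j.+1 <= 16.
  have := sum_E n.+2; rewrite big_ord_recl /=; have := E_ge0 0; lra.
lra.
Qed.
End CFfacts.

Lemma limsup_fin (R : realType) (u : nat -> R) :
  (limn_esup (fun n => (u n)%:E) < +oo)%E <->
  exists M : R, exists n0 : nat, forall n, (n0 <= n)%N -> u n <= M.
Proof.
split.
- rewrite /limn_esup /limf_esup => /ereal_inf_lt[_ [V hV <-]] hs.
  case: hV => n0 _ hn0.
  have ub n : (n0 <= n)%N -> ((u n)%:E <= ereal_sup [set (u x)%:E | x in V])%E.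
    by move=> h; apply: ereal_sup_ubound; exists n => //; apply: hn0.
  move: hs ub; case: (ereal_sup _) => [r| |] // _ ub.
  + by exists r, n0 => n /ub; rewrite lee_fin.
  + by exists 0, n0 => n /ub.
- move=> [M [n0 h]].
  rewrite /limn_esup /limf_esup.
  apply: (@le_lt_trans _ _ M%:E); last exact: ltry.
  apply: (@le_trans _ _ (ereal_sup [set (u x)%:E | x in (fun n : nat => (n0 <= n)%N)])).
    apply: ereal_inf_lbound; exists (fun n : nat => (n0 <= n)%N) => //.
    by exists n0.
  apply: ge_ereal_sup => _ [n /= hn <-]; rewrite lee_fin; exact: h.
Qed.

Section Final.
Variable R : realType.
Variable w : R.
Hypotheses (w0 : 0 < w) (w1 : w < 1) (wi : irrational w).
Variable s : R.
Hypothesis s0 : 0 < s.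

Local Notation om := (omg w).
Local Notation q := (qcf w).
Local Notation b := (betam1 w).

Definition A n := \sum_(j < n.+1) ln (q j.+1) / q j.
Definition gg k := \sum_(j < k.+1) b j * ln (om j)^-1 + s * ln (b k).
Definition GG k := A k - s * ln (q k).

Lemma term_ge0 j : 0 <= ln (q j.+1) / q j.
Proof.
by rewrite divr_ge0 ?ln_ge0 ?(q_ge1 R w w0 w1 wi) // ltW ?(q_gt0 R w w0 w1 wi).
Qed.

Lemma A_mono n m : (n <= m)%N -> A n <= A m.
Proof.
move/subnK <-; elim: (m - n)%N => [|d IH]; first by rewrite add0n.
rewrite addSn /A [in X in _ <= X]big_ord_recr /=; have := term_ge0 (d + n).+1.
rewrite /A in IH; lra.
Qed.

Lemma GG_gg k : `|GG k - gg k| <= 32 + s.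
Proof.
have e : GG k - gg k = \sum_(j < k.+1) (ln (q j.+1) / q j - b j * ln (om j)^-1)
    - s * ln (b k * q k).
  rewrite /GG /gg /A sumrB lnM ?posrE ?(b_gt0 R w w0 w1 wi) ?(q_gt0 R w w0 w1 wi) //.
  ring.
rewrite e; have := sum_diff R w w0 w1 wi k; have := Lb_bounds R w w0 w1 wi k.
set L := ln _; set D := \sum_(_ < _) _.
move=> /andP[l1 l2]; rewrite !ler_norml => /andP[d1 d2].
clearbody L D.
have sl : 0 <= s by apply: ltW.
have h1 : 0 <= s * (L + 1) by apply: mulr_ge0 => //; lra.
have h2 : s * L <= 0 by apply: mulr_ge0_le0 => //.
rewrite mulrDr mulr1 in h1.
apply/andP; split; lra.
Qed.

Lemma kN_ge N k : (k <= N)%N -> q k <= N%:R -> (k <= kN w N)%N.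
Proof.
move=> kN qN; have kN' : (k < N.+1)%N by [].
exact: (@leq_bigmax_cond _ (fun i : 'I_N.+1 => q i <= N%:R) (fun i => nat_of_ord i) (Ordinal kN')).
Qed.

Lemma kN_q N : (1 <= N)%N -> q (kN w N) <= N%:R.
Proof.
move=> N1.
have c : (0 < #|[pred i : 'I_N.+1 | (q i <= N%:R)%R]|)%N.
  apply/card_gt0P; exists ord0; rewrite inE /= /qcf /=.
  by rewrite (_ : 1 = 1%:R) // ler_nat.
have [i0 Pi0 E] := eq_bigmax_cond (fun i : 'I_N.+1 => nat_of_ord i) c.
by rewrite /kN E; move: Pi0; rewrite inE.
Qed.

Definition ff (N : nat) := A (kN w N) - s * ln (N%:R : R).

Lemma dir1 : (exists M : R, exists n0, forall N, (n0 <= N)%N -> ff N <= M) ->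
  exists M : R, exists k0, forall k, (k0 <= k)%N -> gg k <= M.
Proof.
move=> [M [n0 h]]; exists (M + 32 + 2 * s), n0 => k hk.
have q1 := q_ge1 R w w0 w1 wi k.
have qk0 : 0 <= q k by lra.
set N := (Num.truncn (q k)).+1.
have hN : q k < N%:R by apply: truncnS_gt.
have hN2 : N%:R <= q k + 1.
  by rewrite /N -natr1 lerD2r truncn_le.
have kq := q_ge_nat R w w0 w1 wi k.
have kN' : (k <= N)%N.
  by apply: ltnW; rewrite -(ltr_nat R); lra.
have kK := @kN_ge N k kN' (ltW hN).
have fN := h N (leq_trans hk kN').
rewrite /ff in fN.
have Am := A_mono k _ kK.
have N0 : 0 < (N%:R : R) by lra.
have lnN : ln (N%:R : R) <= 1 + ln (q k).
  have : ln (N%:R : R) <= ln (2 * q k).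
    rewrite ler_ln ?posrE //; lra.
  rewrite lnM ?posrE //; try lra.
  have := ln2_le1 R; lra.
have slnN : s * ln (N%:R : R) <= s * (1 + ln (q k)).
  by rewrite ler_wpM2l // ltW.
have := GG_gg k; rewrite ler_norml /GG => /andP[g1 g2].
rewrite mulrDr mulr1 in slnN.
lra.
Qed.

Lemma dir2 : (exists M : R, exists k0, forall k, (k0 <= k)%N -> gg k <= M) ->
  exists M : R, exists n0, forall N, (n0 <= N)%N -> ff N <= M.
Proof.
move=> [M [k0 h]]; exists (M + 32 + s), (k0 + (Num.truncn (q k0)).+1)%N => N hN.
have hk0 : (k0 <= N)%N by apply: leq_trans hN; apply: leq_addr.
have N1 : (1 <= N)%N by apply: leq_trans hN; rewrite addnS.
have qN : q k0 <= N%:R.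
  have : ((Num.truncn (q k0)).+1 <= N)%N by apply: leq_trans hN; apply: leq_addl.
  rewrite -(ler_nat R) => h1; have := truncnS_gt (q k0); lra.
set K := kN w N.
have kK : (k0 <= K)%N := @kN_ge N k0 hk0 qN.
have qK : q K <= N%:R := @kN_q N N1.
have N0 : 0 < (N%:R : R) by rewrite ltr0n.
have lnK : ln (q K) <= ln (N%:R : R).
  by rewrite ler_ln ?posrE ?(q_gt0 R w w0 w1 wi).
have slnK : s * ln (q K) <= s * ln (N%:R : R) by rewrite ler_wpM2l // ltW.
have := GG_gg K; rewrite ler_norml /GG => /andP[g1 g2].
have := h K kK; rewrite /ff -/K; lra.
Qed.
End Final.

Theorem mainTheorem6 (R : realType) (w s : R) :
  0 < w -> w < 1 -> irrational w -> 0 < s ->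
  ((limn_esup (fun N : nat =>
      ((\sum_(j < (kN w N).+1) ln (qcf w j.+1) / qcf w j) - s * ln N%:R)%:E)
     < +oo)%E
   <->
   (limn_esup (fun k : nat =>
      ((\sum_(j < k.+1) betam1 w j * ln (omg w j)^-1) + s * ln (betam1 w k))%:E)
     < +oo)%E).
Proof.
move=> w0 w1 wi s0.
have e1 := limsup_fin R (fun N : nat => ff R w s N).
have e2 := limsup_fin R (fun k : nat => gg R w s k).
rewrite /ff /gg /A in e1 e2.
rewrite e1 e2; split; [exact: (@dir1 R w w0 w1 wi s s0) | exact: (@dir2 R w w0 w1 wi s s0)].
Qed.
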